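(* Let $\lambda_1\ge0$ and $\lambda_2>0$. Let $P_n$ be the monic polynomials orthogonal with respect to $\langle f,g\rangle_F=\int_{\mathbb R}fg\,e^{-x^4}dx$, $k_n=\langle P_n,P_n\rangle_F$, and $Q_n$ the monic polynomials orthogonal with respect to $\langle f,g\rangle_S=\int_{\mathbb R}fg\,e^{-x^4}dx+\lambda_1f(0)g(0)+\lambda_2f'(0)g'(0)$, $\widehat k_n=\langle Q_n,Q_n\rangle_S$. Then $Q_0(x)=1$, $Q_1(x)=x$, for all $n\ge1$ $$xP_{2n-1}(x)=Q_{2n}(x)+a_nQ_{2n-2}(x),$$ and for all $n\ge2$ $$x^2P_n(x)=Q_{n+2}(x)+b_nQ_n(x)+\alpha_nQ_{n-2}(x),\qquad x^2Q_n(x)=P_{n+2}(x)+\sigma_nP_n(x)+\delta_nP_{n-2}(x),$$ where $a_n=\dfrac{k_{2n-1}}{\widehat k_{2n-2}}$, $\alpha_n=\dfrac{k_n}{\widehat k_{n-2}}$, $b_n=\dfrac{\langle x^2P_n,Q_n\rangle_S}{\langle Q_n,Q_n\rangle_S}$, $\delta_n=\dfrac{\widehat k_n}{k_{n-2}}$, $\sigma_n=b_n\dfrac{\widehat k_n}{k_n}$.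
   Context: All polynomials are real; monic orthogonal polynomials have degree $n$, leading coefficient $1$, and are orthogonal to all polynomials of lower degree in the respective inner product. *)

(* Defs.v *)
From HB Require Import structures.
From mathcomp Require Import all_boot all_order all_algebra.
From mathcomp Require Import all_classical all_reals all_analysis.
Set Implicit Arguments. Unset Strict Implicit. Unset Printing Implicit Defensive.
Import Order.TTheory GRing.Theory Num.Theory.
Local Open Scope classical_set_scope.
Local Open Scope ring_scope.

Definition ipF {R : realType} (p q : {poly R}) : R :=
  Rintegral (@lebesgue_measure R) setT
    (fun x : R => p.[x] * q.[x] * expR (- x ^+ 4)).

Definition ipS {R : realType} (l1 l2 : R) (p q : {poly R}) : R :=
  ipF p q + l1 * p.[0] * q.[0] + l2 * (p^`()).[0] * (q^`()).[0].

Definition monic_OPS {R : realType} (ip : {poly R} -> {poly R} -> R)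
    (P : nat -> {poly R}) : Prop :=
  forall n : nat,
    P n \is monic /\ size (P n) = n.+1 /\
    (forall q : {poly R}, (size q <= n)%N -> ip (P n) q = 0).

(* Main.v *)
Require Import Defs.
From HB Require Import structures.
From mathcomp Require Import all_boot all_order all_algebra.
From mathcomp Require Import all_classical all_reals all_analysis.
From mathcomp Require Import measurable_realfun.
From mathcomp Require Import ring lra zify.
Import Order.TTheory GRing.Theory Num.Theory.

Module Aux1.
Import Order.TTheory GRing.Theory Num.Theory numFieldNormedType.Exports.
Local Open Scope classical_set_scope.
Local Open Scope ring_scope.

Section Analytic.
Context {R : realType}.
Local Notation mu := (@lebesgue_measure R).

Lemma split_int (h : R -> R) : continuous h -> (forall x, 0 <= h x) ->
  (\int[mu]_x (h x)%:E =
   \int[mu]_(x in `]-oo, 0%R]) (h x)%:E + \int[mu]_(x in `[0%R, +oo[) (h x)%:E)%E.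
Proof.
move=> ch h0.
have mh : measurable_fun [set: R] h by exact: continuous_measurable_fun.
rewrite -(setUv `[0%R, +oo[) ge0_integral_setU//=; last 4 first.
  exact: measurableC.
  by apply/measurable_EFinP; rewrite setUv.
  by move=> x _; rewrite lee_fin.
  exact/disj_setPCl.
rewrite setCitvr.
rewrite integral_itv_bndo_bndc; first exact: addeC.
exact/measurable_EFinP/measurable_funTS.
Qed.



Lemma refl_ge0 (G : R -> R) : continuous G -> (forall x, 0 <= G x) ->
  (\int[mu]_x (G (- x))%:E = \int[mu]_x (G x)%:E)%E.
Proof.
move=> cG G0.
have cGN : continuous (G \o -%R).
  by move=> x; apply: continuous_comp; [exact: continuousN|exact: cG].
rewrite (split_int _ cGN); last by move=> x; exact: G0.
rewrite (split_int _ cG)//.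
rewrite [X in _ = X]addeC.
congr (_ + _)%E.
- have := @ge0_integration_by_substitutionNy R (G \o -%R) 0.
  rewrite oppr0 => ->; last 2 first.
    exact: continuous_subspaceT.
    by move=> x _; exact: G0.
  by apply: eq_integral => x _ /=; rewrite opprK.
- have := @ge0_integration_by_substitutionNy R G 0.
  rewrite oppr0 => -> //; last exact: continuous_subspaceT.
Qed.



Lemma refl_int (g : R -> R) : continuous g ->
  (\int[mu]_x (g (- x))%:E = \int[mu]_x (g x)%:E)%E.
Proof.
move=> cg.
have key : forall h : R -> R, continuous h ->
    (\int[mu]_x (Num.max (h (- x)) 0)%:E = \int[mu]_x (Num.max (h x) 0)%:E)%E.
  move=> h ch; apply: (@refl_ge0 (fun x => Num.max (h x) 0)).
    move=> x; have := @max_fun_continuous _ R R h (fun=> 0) ch (@cst_continuous _ _ 0) x; exact.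
  by move=> x; rewrite le_max lexx orbT.
have cgN : continuous (fun x => - g x).
  by move=> x; apply: continuousN; exact: cg.
rewrite integralE [in RHS]integralE.
congr (_ - _)%E.
- transitivity (\int[mu]_x (Num.max (g (- x)) 0)%:E)%E.
    by apply: eq_integral => x _; rewrite funeposE EFin_max.
  rewrite key//.
  by apply: eq_integral => x _; rewrite funeposE EFin_max.
- transitivity (\int[mu]_x (Num.max ((fun y => - g y) (- x)) 0)%:E)%E.
    by apply: eq_integral => x _; rewrite funenegE EFin_max.
  etransitivity; first exact: (key _ cgN).
  by apply: eq_integral => x _; rewrite funenegE EFin_max.
Qed.
End Analytic.

End Aux1.
Import Aux1.

Module Aux2.
Import Order.TTheory GRing.Theory Num.Theory numFieldNormedType.Exports.
Local Open Scope classical_set_scope.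
Local Open Scope ring_scope.

Section Bounds.
Context {R : realType}.

Lemma powle n (x y : R) : 0 <= x -> x <= y -> x ^+ n <= y ^+ n.
Proof. by move=> x0 xy; apply: lerXn2r; rewrite ?nnegrE //; exact: le_trans xy. Qed.
Arguments powle n {x y}.

Lemma powb (y : R) (N : nat) : 0 <= y -> (0 < N)%N ->
  y ^+ N <= N%:R ^+ N * expR (y ^+ 2 - y).
Proof.
move=> y0 N0.
set t := (y ^+ 2 - y) / N%:R.
have Npos : 0 < N%:R :> R by rewrite ltr0n.
have N1 : 1 <= N%:R :> R by rewrite ler1n.
have tN : t * N%:R = y ^+ 2 - y by rewrite /t divfK ?gt_eqF.
have h1 : y <= N%:R * (1 + t).
  rewrite mulrDr mulr1 mulrC tN.
  have := sqr_ge0 (y - 1); rewrite expr2 => hh. nra.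
have h3 : 0 <= 1 + t.
  by rewrite -(pmulr_rge0 _ Npos); exact: le_trans y0 h1.
apply: (le_trans (powle N y0 h1)).
rewrite exprMn; apply: ler_wpM2l; first exact: exprn_ge0 (ltW Npos).
rewrite -tN expRM_natr; exact: powle _ h3 (expR_ge1Dx t).
Qed.

Lemma absX_le (x : R) i N : (i <= 2 * N)%N -> `|x| ^+ i <= 1 + (x ^+ 2) ^+ N.
Proof.
move=> iN.
have hx2 : 0 <= (x ^+ 2) ^+ N by rewrite exprn_ge0 // sqr_ge0.
case: (leP `|x| 1) => hx.
  apply: (le_trans (exprn_ile1 _ (normr_ge0 x) hx)).
  by rewrite lerDl.
have -> : (x ^+ 2) ^+ N = `|x| ^+ i * `|x| ^+ (2 * N - i).
  by rewrite -exprD subnKC // exprM real_normK // num_real.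
rewrite -[X in X <= _]add0r; apply: lerD; first exact: ler01.
rewrite -[X in X <= _]mulr1 ler_wpM2l ?exprn_ge0 //.
by rewrite exprn_ege1 // ltW.
Qed.

Lemma horner_bound (p : {poly R}) x N : (size p <= N)%N ->
  `|p.[x]| <= (\sum_(i < size p) `|p`_i|) * (1 + (x ^+ 2) ^+ N).
Proof.
move=> hN.
rewrite horner_coef mulr_suml.
apply: (le_trans (ler_norm_sum _ _ _)); apply: ler_sum => i _.
rewrite normrM normrX; apply: ler_wpM2l; first exact: normr_ge0.
apply: absX_le; have := ltn_ord i; lia.
Qed.

Lemma gauss_bound (x : R) N : (0 < N)%N ->
  (1 + (x ^+ 2) ^+ N) * expR (- x ^+ 4) <= (expR 1 + N%:R ^+ N) * expR (- x ^+ 2).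
Proof.
move=> N0; rewrite mulrDl mulrDl mul1r; apply: lerD.
  rewrite -expRD ler_expR.
  have y0 : 0 <= x ^+ 2 by exact: sqr_ge0.
  have -> : x ^+ 4 = x ^+ 2 * x ^+ 2 by rewrite -exprD.
  have := sqr_ge0 (x ^+ 2 - 1); rewrite expr2 => hh; nra.
have y0 : 0 <= x ^+ 2 by exact: sqr_ge0.
apply: (le_trans (y := N%:R ^+ N * expR ((x ^+ 2) ^+ 2 - x ^+ 2) * expR (- x ^+ 4))).
  by apply: ler_wpM2r; [exact: ltW (expR_gt0 _) | exact: powb].
rewrite -mulrA -expRD; apply: ler_wpM2l; first by rewrite exprn_ge0 // ler0n.
by rewrite ler_expR -exprM /= addrAC subrr add0r.
Qed.
End Bounds.

Section Analytic2.
Context {R : realType}.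
Local Notation mu := (@lebesgue_measure R).

Lemma cont_w (p : {poly R}) : continuous (fun x => p.[x] * expR (- x ^+ 4)).
Proof.
have e : (fun x : R => - x ^+ 4) = horner (- 'X^4) by apply: funext => x; rewrite hornerN hornerXn.
move=> x; apply: continuousM; first exact: continuous_horner.
apply: (@continuous_comp _ _ _ (fun x : R => - x ^+ 4) expR); last exact: continuous_expR.
rewrite e; exact: continuous_horner.
Qed.

Lemma intF (p : {poly R}) :
  mu.-integrable setT (EFin \o (fun x => p.[x] * expR (- x ^+ 4))).
Proof.
set N := (size p).+1. set A := \sum_(i < size p) `|p`_i|.
have A0 : 0 <= A by apply: sumr_ge0 => i _; exact: normr_ge0.
apply: (@le_integrable _ _ _ mu setT _ _
   (fun x => (A * (expR 1 + N%:R ^+ N))%:E * (EFin \o gauss_fun) x)%E) => //.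
- apply/measurable_EFinP; exact: continuous_measurable_fun (cont_w p).
- move=> x _; rewrite /comp /gauss_fun -EFinM !abse_EFin lee_fin.
  rewrite [X in _ <= X]ger0_norm; last first.
    by rewrite mulr_ge0 // ?mulr_ge0 // ?addr_ge0 // ?exprn_ge0 // ?ler0n // ltW // expR_gt0.
  rewrite normrM (ger0_norm (ltW (expR_gt0 _))).
  apply: (le_trans (y := A * (1 + (x ^+ 2) ^+ N) * expR (- x ^+ 4))).
    apply: ler_wpM2r; [exact: ltW (expR_gt0 _) | exact: horner_bound].
  rewrite -mulrA -[X in _ <= X]mulrA; apply: ler_wpM2l => //.
  exact: gauss_bound.
- exact: integrableZl integrableT_gauss.
Qed.
End Analytic2.

End Aux2.
Import Aux2.

Module Aux3.
Import Order.TTheory GRing.Theory Num.Theory numFieldNormedType.Exports.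
Local Open Scope classical_set_scope.
Local Open Scope ring_scope.

Section Pos.
Context {R : realType}.
Local Notation mu := (@lebesgue_measure R).

Lemma posW (g : R -> R) x0 : continuous g -> (forall x, 0 <= g x) -> 0 < g x0 ->
  mu.-integrable setT (EFin \o g) -> 0 < fine (\int[mu]_x (g x)%:E).
Proof.
move=> cg g0 gx0 ig.
have mg : measurable_fun setT g by exact: continuous_measurable_fun.
have [e e0 He] : exists2 e : R, 0 < e & forall y, `|x0 - y| < e -> g x0 / 2 < g y.
  have : \forall t \near x0, g x0 / 2 < g t.
    by apply: (cvgr_gt (g x0) (cg x0)); lra.
  case/nbhs_ballP => e e0 H; exists e => // y hy; apply: H; exact: hy.
have igfin := integrable_fin_num measurableT ig.
have ige0 : (0 <= \int[mu]_x (g x)%:E)%E by apply: integral_ge0 => x _; rewrite lee_fin.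
apply: fine_gt0; apply/andP; split; last by rewrite -ge0_fin_numE.
set c := g x0 / 2.
apply: (lt_le_trans (y := (c * (2 * e))%:E)).
  by rewrite lte_fin mulr_gt0 // ?mulr_gt0 //; lra.
have h1 : (\int[mu]_(x in `](x0 - e)%R, (x0 + e)%R[) (g x)%:E <= \int[mu]_x (g x)%:E)%E.
  apply: ge0_subset_integral => //.
  - exact/measurable_EFinP.
  - by move=> x _; rewrite lee_fin.
apply: (le_trans _ h1).
have h3 : (\int[mu]_(x in `](x0 - e)%R, (x0 + e)%R[) (cst c%:E) x = (c * (2 * e))%:E)%E.
  rewrite integral_cst //= lebesgue_measure_itv /= lte_fin ifT; last lra.
  by rewrite -EFinD -EFinM; congr EFin; congr (_ * _); lra.
rewrite -h3.
apply: ge0_le_integral => //.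
- by move=> x _; rewrite lee_fin /c; lra.
- apply: measurable_funTS; exact/measurable_EFinP.
- move=> x /=; rewrite in_itv /= => /andP[h4 h5]; rewrite lee_fin ltW //.
  apply: He; rewrite ltr_norml; apply/andP; split; lra.
Qed.



End Pos.

End Aux3.
Import Aux3.

Module Aux4.
Import Order.TTheory GRing.Theory Num.Theory.
Local Open Scope ring_scope.

Section PolyFacts.
Variable R : realType.

Lemma monic_sub (p q : {poly R}) n : p \is monic -> q \is monic ->
  size p = n.+1 -> size q = n.+1 -> (size (p - q)%R <= n)%N.
Proof.
move=> mp mq sp sq; apply/leq_sizeP => j jn; rewrite coefB.
case: (ltnP n j) => hj.
  by rewrite !nth_default ?subrr // ?sp ?sq.
have -> : j = n by apply/eqP; rewrite eqn_leq hj jn.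
have /monicP := mp; rewrite lead_coefE sp /= => ->.
by have /monicP := mq; rewrite lead_coefE sq /= => ->; rewrite subrr.
Qed.

Lemma NN : (- 'X : {poly R}) \Po - 'X = 'X.
Proof. by rewrite -{2}scaleN1r comp_polyZ comp_polyX scaleN1r opprK. Qed.

Lemma compNN (p : {poly R}) : (p \Po - 'X) \Po - 'X = p.
Proof. by rewrite -comp_polyA NN comp_polyXr. Qed.

Lemma size_compN (p : {poly R}) : size (p \Po - 'X) = size p.
Proof. by rewrite size_comp_poly2 // size_polyN size_polyX. Qed.

Lemma lead_compN (p : {poly R}) :
  lead_coef (p \Po - 'X) = lead_coef p * (-1) ^+ (size p).-1.
Proof. by rewrite lead_coef_comp ?size_polyN ?size_polyX // lead_coefN lead_coefX. Qed.

Lemma compXn m : ('X ^+ m : {poly R}) \Po - 'X = (-1) ^+ m *: 'X ^+ m.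
Proof.
elim: m => [|m IH]; first by rewrite !expr0 -polyC1 comp_polyC scale1r.
rewrite !exprS comp_polyM comp_polyX IH -scaleN1r -scalerAl -scalerAr scalerA.
by rewrite -exprS.
Qed.

Lemma parXm m (p : {poly R}) a : p \Po - 'X = (-1) ^+ a *: p ->
  ('X ^+ m * p) \Po - 'X = (-1) ^+ (m + a) *: ('X ^+ m * p).
Proof.
move=> hp; rewrite comp_polyM hp compXn -scalerAl -scalerAr scalerA exprD //.
Qed.

Lemma sign_sq n : (-1) ^+ n * (-1) ^+ n = 1 :> R.
Proof. by have := signrMK n (1 : R); rewrite mulr1. Qed.
End PolyFacts.

Section Form.
Variable R : realType.
Variable B : {poly R} -> {poly R} -> R.
Hypothesis Bsym : forall p q, B p q = B q p.
Hypothesis BD : forall p1 p2 q, B (p1 + p2) q = B p1 q + B p2 q.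
Hypothesis BZ : forall a p q, B (a *: p) q = a * B p q.
Hypothesis Bdef : forall p, p != 0 -> B p p != 0.

Lemma BNl p q : B (- p) q = - B p q.
Proof. by rewrite -scaleN1r BZ mulN1r. Qed.
Lemma BBl p1 p2 q : B (p1 - p2) q = B p1 q - B p2 q.
Proof. by rewrite BD BNl. Qed.
Lemma BDr p q1 q2 : B p (q1 + q2) = B p q1 + B p q2.
Proof. by rewrite Bsym BD !(Bsym _ p). Qed.
Lemma BZr a p q : B p (a *: q) = a * B p q.
Proof. by rewrite Bsym BZ Bsym. Qed.
Lemma BBr p q1 q2 : B p (q1 - q2) = B p q1 - B p q2.
Proof. by rewrite Bsym BBl !(Bsym _ p). Qed.

Variable P : nat -> {poly R}.
Hypothesis HP : monic_OPS B P.

Lemma P_monic n : P n \is monic. Proof. by case: (HP n). Qed.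
Lemma P_size n : size (P n) = n.+1. Proof. by case: (HP n) => _ []. Qed.
Lemma P_orth n (q : {poly R}) : (size q <= n)%N -> B (P n) q = 0.
Proof. by case: (HP n) => _ [] _; apply. Qed.
Lemma P_orthr n (q : {poly R}) : (size q <= n)%N -> B q (P n) = 0.
Proof. by move=> h; rewrite Bsym P_orth. Qed.
Lemma P_neq0 n : P n != 0. Proof. by rewrite -size_poly_eq0 P_size. Qed.
Lemma P_k n : B (P n) (P n) != 0. Proof. exact: Bdef (P_neq0 n). Qed.
Lemma P_ne i j : i != j -> B (P i) (P j) = 0.
Proof.
case: (ltngtP i j) => // h _.
  by apply: P_orthr; rewrite P_size.
by apply: P_orth; rewrite P_size.
Qed.
Lemma P_lead n (q : {poly R}) : q \is monic -> size q = n.+1 -> B (P n) q = B (P n) (P n).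
Proof.
move=> mq sq; rewrite -[q](subrK (P n)) BDr P_orth ?add0r //.
exact: monic_sub mq (P_monic n) sq (P_size n).
Qed.

Lemma vanish N (d : {poly R}) : (size d <= N)%N -> (forall j, (j < N)%N -> B d (P j) = 0) -> d = 0.
Proof.
elim: N d => [|N IH] d sd hd.
  by apply/eqP; rewrite -size_poly_eq0 -leqn0.
set c := d`_N.
have se : (size (d - c *: P N)%R <= N)%N.
  apply/leq_sizeP => j jN; rewrite coefB coefZ.
  case: (ltnP N j) => hj.
    rewrite !nth_default ?mulr0 ?subrr //; first by rewrite P_size.
    exact: leq_trans sd _.
  have -> : j = N by apply/eqP; rewrite eqn_leq hj jN.
  have : (P N)`_N = 1 by have /monicP := P_monic N; rewrite lead_coefE P_size.
  by move=> ->; rewrite mulr1 subrr.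
have c0 : c = 0.
  have := hd N (ltnSn N).
  rewrite -[d](subrK (c *: P N)) BD BZ P_orthr // add0r => /eqP.
  by rewrite mulf_eq0 (negbTE (P_k N)) orbF => /eqP.
move: se; rewrite c0 scale0r subr0 => se.
by apply: IH => // j jN; apply: hd; exact: ltnW.
Qed.

Hypothesis Brefl : forall p q, B (p \Po - 'X) (q \Po - 'X) = B p q.

Lemma P_par n : P n \Po - 'X = (-1) ^+ n *: P n.
Proof.
set s := (-1) ^+ n : R.
have ss : s * s = 1 by exact: sign_sq.
set Rn := s *: (P n \Po - 'X).
have mR : Rn \is monic.
  apply/monicP; rewrite lead_coefZ lead_compN (monicP (P_monic n)) P_size /= mul1r.
  exact: ss.
have sR : size Rn = n.+1 by rewrite size_scale ?signr_eq0 // size_compN P_size.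
have : P n - Rn = 0.
  apply: (@vanish n); first exact: monic_sub (P_monic n) mR (P_size n) sR.
  move=> j jn; rewrite BBl P_orth ?P_size // /Rn BZ.
  rewrite -[P j]compNN Brefl P_orth ?mulr0 ?subr0 // size_compN P_size //.
move/eqP; rewrite subr_eq0 => /eqP eP.
by rewrite {2}eP /Rn scalerA ss scale1r.
Qed.

Lemma B_odd (p q : {poly R}) a b : p \Po - 'X = (-1) ^+ a *: p -> q \Po - 'X = (-1) ^+ b *: q ->
  odd (a + b) -> B p q = 0.
Proof.
move=> hp hq ab.
have e : (-1) ^+ (a + b) = -1 :> R by rewrite -signr_odd ab.
have : B p q = - B p q by rewrite -{1}Brefl hp hq BZ BZr mulrA -exprD e mulN1r.
move=> h; lra.
Qed.
End Form.

End Aux4.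
Import Aux4.

Module Aux5.
Import Order.TTheory GRing.Theory Num.Theory numFieldNormedType.Exports.
Local Open Scope classical_set_scope.
Local Open Scope ring_scope.

Section Props.
Context {R : realType}.
Local Notation mu := (@lebesgue_measure R).
Implicit Types p q : {poly R}.

Lemma iF p q : mu.-integrable setT (EFin \o (fun x => p.[x] * q.[x] * expR (- x ^+ 4))).
Proof.
have -> : (fun x => p.[x] * q.[x] * expR (- x ^+ 4)) = (fun x => (p * q).[x] * expR (- x ^+ 4)).
  by apply: funext => x; rewrite hornerM.
exact: intF.
Qed.

Lemma ipF_sym p q : ipF p q = ipF q p.
Proof. by rewrite /ipF; congr Rintegral; apply: funext => x; rewrite (mulrC p.[x]). Qed.

Lemma ipF_D p1 p2 q : ipF (p1 + p2) q = ipF p1 q + ipF p2 q.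
Proof.
rewrite /ipF -RintegralD //; try exact: iF.
by congr Rintegral; apply: funext => x; rewrite hornerD !mulrDl.
Qed.

Lemma ipF_Z a p q : ipF (a *: p) q = a * ipF p q.
Proof.
rewrite /ipF -RintegralZl //; last exact: iF.
by congr Rintegral; apply: funext => x; rewrite hornerZ !mulrA.
Qed.

Lemma ipF_Xm m p q : ipF ('X ^+ m * p) q = ipF p ('X ^+ m * q).
Proof.
rewrite /ipF; congr Rintegral; apply: funext => x.
by rewrite !hornerM; ring.
Qed.

Lemma ipF_refl p q : ipF (p \Po - 'X) (q \Po - 'X) = ipF p q.
Proof.
rewrite /ipF /Rintegral; congr fine.
have cg : continuous (fun x => p.[x] * q.[x] * expR (- x ^+ 4)).
  have -> : (fun x => p.[x] * q.[x] * expR (- x ^+ 4)) = (fun x => (p * q).[x] * expR (- x ^+ 4)).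
    by apply: funext => x; rewrite hornerM.
  exact: cont_w.
rewrite -(refl_int _ cg); apply: eq_integral => x _.
have e4 : (- x) ^+ 4 = x ^+ 4 by rewrite -[4%N]/(2 * 2)%N exprM sqrrN -exprM.
by rewrite !horner_comp hornerN hornerX e4.
Qed.

Lemma ipF_pos p : p != 0 -> 0 < ipF p p.
Proof.
move=> p0.
have [x0 hx0] : exists x0, p.[x0] != 0.
  case: (pselect (exists x0, p.[x0] != 0)) => // hn; exfalso.
  have h : forall x, p.[x] = 0.
    move=> x; apply/eqP; apply/negPn/negP => hx; apply: hn; exists x; exact: hx.
  have := @max_poly_roots _ p [seq i%:R | i <- iota 0 (size p)] p0.
  rewrite size_map size_iota ltnn => H; suff : false by []; apply: H.
    by apply/allP => y /mapP[i _ ->]; rewrite /root h.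
  rewrite map_inj_uniq ?iota_uniq //; exact: (mulrIn (oner_neq0 R)).
rewrite /ipF /Rintegral.
apply: (@posW _ (fun x => p.[x] * p.[x] * expR (- x ^+ 4)) x0).
- have -> : (fun x => p.[x] * p.[x] * expR (- x ^+ 4)) = (fun x => (p * p).[x] * expR (- x ^+ 4)).
    by apply: funext => x; rewrite hornerM.
  exact: cont_w.
- by move=> x; rewrite mulr_ge0 // ?expR_ge0 // -expr2 sqr_ge0.
- by rewrite mulr_gt0 ?expR_gt0 // -expr2 exprn_even_gt0 // hx0 orbT.
- exact: iF.
Qed.

Variables (l1 l2 : R).

Lemma ipS_sym p q : ipS l1 l2 p q = ipS l1 l2 q p.
Proof. rewrite /ipS ipF_sym; ring. Qed.

Lemma ipS_D p1 p2 q : ipS l1 l2 (p1 + p2) q = ipS l1 l2 p1 q + ipS l1 l2 p2 q.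
Proof. rewrite /ipS ipF_D derivD !hornerD; ring. Qed.

Lemma ipS_Z a p q : ipS l1 l2 (a *: p) q = a * ipS l1 l2 p q.
Proof. rewrite /ipS ipF_Z derivZ !hornerZ; ring. Qed.

Lemma ipS_refl p q : ipS l1 l2 (p \Po - 'X) (q \Po - 'X) = ipS l1 l2 p q.
Proof.
rewrite /ipS ipF_refl !deriv_comp derivN derivX !hornerM !horner_comp !hornerN hornerX oppr0 hornerC.
ring.
Qed.

Lemma ipS_pos p : 0 <= l1 -> 0 <= l2 -> p != 0 -> 0 < ipS l1 l2 p p.
Proof.
move=> h1 h2 p0; rewrite /ipS.
have hF := ipF_pos _ p0.
have a1 : 0 <= l1 * p.[0] * p.[0] by rewrite -mulrA mulr_ge0 // -expr2 sqr_ge0.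
have a2 : 0 <= l2 * (p^`()).[0] * (p^`()).[0] by rewrite -mulrA mulr_ge0 // -expr2 sqr_ge0.
apply: (lt_le_trans hF); rewrite -addrA lerDl; exact: addr_ge0.
Qed.

Lemma ipS_X1 p q : ipS l1 l2 ('X * p) q = ipF p ('X * q) + l2 * p.[0] * (q^`()).[0].
Proof.
rewrite /ipS (_ : ipF ('X * p) q = ipF p ('X * q)); last by have := ipF_Xm 1 p q; rewrite expr1.
rewrite derivM derivX !(hornerD, hornerM, hornerX, hornerC, hornerMn) /=; ring.
Qed.

Lemma ipS_X2l p q : ipS l1 l2 ('X ^+ 2 * p) q = ipF p ('X ^+ 2 * q).
Proof.
rewrite /ipS ipF_Xm derivM derivXn !(hornerD, hornerM, hornerMn, hornerXn, hornerX) /=; ring.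
Qed.

Lemma ipS_X2r p q : ipS l1 l2 p ('X ^+ 2 * q) = ipF p ('X ^+ 2 * q).
Proof.
rewrite /ipS derivM derivXn !(hornerD, hornerM, hornerMn, hornerXn, hornerX) /=; ring.
Qed.
End Props.

End Aux5.
Import Aux5.

Import Order.TTheory GRing.Theory Num.Theory numFieldNormedType.Exports.
Local Open Scope ring_scope.

Lemma size_sub_le (R : realType) (p q : {poly R}) n :
  (size p <= n)%N -> (size q <= n)%N -> (size (p - q)%R <= n)%N.
Proof.
move=> hp hq; apply: (leq_trans (size_polyD _ _)).
by rewrite geq_max hp size_polyN hq.
Qed.

Lemma size_scale_le (R : realType) (a : R) (p : {poly R}) n :
  (size p <= n)%N -> (size (a *: p) <= n)%N.
Proof. by move=> h; exact: leq_trans (size_scale_leq _ _) h. Qed.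

Lemma odd_zero (R : realType) (p : {poly R}) a :
  p \Po - 'X = (-1) ^+ a *: p -> odd a -> p.[0] = 0.
Proof.
move=> hp oa.
have : (p \Po - 'X).[0] = ((-1) ^+ a *: p).[0] by rewrite hp.
rewrite horner_comp hornerN hornerX oppr0 hornerZ -signr_odd oa expr1 mulN1r.
move=> h; lra.
Qed.

Lemma oddE2 k : odd (2 * k).+1.
Proof. by rewrite /= oddM. Qed.

Lemma odd_of (n k : nat) : n = (2 * k).+1 -> odd n.
Proof. by move->; exact: oddE2. Qed.

Lemma size_Xm (R : realType) m (p : {poly R}) n : p \is monic -> size p = n.+1 ->
  size ('X ^+ m * p) = (m + n).+1.
Proof.
move=> mp sp; rewrite size_monicM ?monicXn ?size_polyXn ?sp; last first.
  by rewrite -size_poly_eq0 sp.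
  by [].
by rewrite addSn addnS.
Qed.

Lemma monic_Xm (R : realType) m (p : {poly R}) : p \is monic -> 'X ^+ m * p \is monic.
Proof. by move=> mp; rewrite monicMl ?monicXn. Qed.

Theorem mainTheorem6 (R : realType) (l1 l2 : R) (P Q : nat -> {poly R}) :
  0 <= l1 -> 0 < l2 ->
  monic_OPS ipF P -> monic_OPS (ipS l1 l2) Q ->
  let k := fun n => ipF (P n) (P n) in
  let kh := fun n => ipS l1 l2 (Q n) (Q n) in
  let b := fun n => ipS l1 l2 ('X ^+ 2 * P n) (Q n) / ipS l1 l2 (Q n) (Q n) in
  [/\ Q 0%N = 1, Q 1%N = 'X,
      (forall n : nat, (1 <= n)%N ->
         'X * P (2 * n - 1)%N
         = Q (2 * n)%N + (k (2 * n - 1)%N / kh (2 * n - 2)%N) *: Q (2 * n - 2)%N),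
      (forall n : nat, (2 <= n)%N ->
         'X ^+ 2 * P n = Q n.+2 + b n *: Q n + (k n / kh (n - 2)%N) *: Q (n - 2)%N)
    & (forall n : nat, (2 <= n)%N ->
         'X ^+ 2 * Q n = P n.+2 + (b n * (kh n / k n)) *: P n
                         + (kh n / k (n - 2)%N) *: P (n - 2)%N)].
Proof.
move=> l10 l20 HP HQ k kh b.
have Fsym : forall p q : {poly R}, ipF p q = ipF q p := @ipF_sym R.
have FD : forall p1 p2 q : {poly R}, ipF (p1 + p2) q = ipF p1 q + ipF p2 q := @ipF_D R.
have FZ : forall a (p q : {poly R}), ipF (a *: p) q = a * ipF p q := @ipF_Z R.
have Fdef : forall p : {poly R}, p != 0 -> ipF p p != 0.
  by move=> p p0; rewrite gt_eqF // ipF_pos.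
have Frefl : forall p q : {poly R}, ipF (p \Po - 'X) (q \Po - 'X) = ipF p q := @ipF_refl R.
have Ssym : forall p q : {poly R}, (ipS l1 l2) p q = (ipS l1 l2) q p := @ipS_sym R l1 l2.
have SD : forall p1 p2 q : {poly R}, (ipS l1 l2) (p1 + p2) q = (ipS l1 l2) p1 q + (ipS l1 l2) p2 q := @ipS_D R l1 l2.
have SZ : forall a (p q : {poly R}), (ipS l1 l2) (a *: p) q = a * (ipS l1 l2) p q := @ipS_Z R l1 l2.
have Sdef : forall p : {poly R}, p != 0 -> (ipS l1 l2) p p != 0.
  by move=> p p0; rewrite gt_eqF // ipS_pos // ltW.
have Srefl : forall p q : {poly R}, (ipS l1 l2) (p \Po - 'X) (q \Po - 'X) = (ipS l1 l2) p q := @ipS_refl R l1 l2.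
have PM n : P n \is monic := @P_monic R _ _ HP n.
have PS n : size (P n) = n.+1 := @P_size R _ _ HP n.
have PO n (q : {poly R}) : (size q <= n)%N -> ipF (P n) q = 0 := @P_orth R _ _ HP n q.
have PNe i j : i != j -> ipF (P i) (P j) = 0 := @P_ne R _ Fsym _ HP i j.
have PL n (q : {poly R}) : q \is monic -> size q = n.+1 -> ipF (P n) q = ipF (P n) (P n)
  := @P_lead R _ Fsym FD _ HP n q.
have PV N (d : {poly R}) : (size d <= N)%N -> (forall j, (j < N)%N -> ipF d (P j) = 0) -> d = 0
  := @vanish R _ Fsym FD FZ Fdef _ HP N d.
have Ppar n : P n \Po - 'X = (-1) ^+ n *: P n := @P_par R _ Fsym FD FZ Fdef _ HP Frefl n.
have Fodd := @B_odd R _ Fsym FZ Frefl.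
have Pk n : ipF (P n) (P n) != 0 := @P_k R _ Fdef _ HP n.
have FBl := @BBl R _ FD FZ.
have QM n : Q n \is monic := @P_monic R _ _ HQ n.
have QS n : size (Q n) = n.+1 := @P_size R _ _ HQ n.
have QO n (q : {poly R}) : (size q <= n)%N -> (ipS l1 l2) (Q n) q = 0 := @P_orth R _ _ HQ n q.
have QNe i j : i != j -> (ipS l1 l2) (Q i) (Q j) = 0 := @P_ne R _ Ssym _ HQ i j.
have QL n (q : {poly R}) : q \is monic -> size q = n.+1 -> (ipS l1 l2) (Q n) q = (ipS l1 l2) (Q n) (Q n)
  := @P_lead R _ Ssym SD _ HQ n q.
have QV N (d : {poly R}) : (size d <= N)%N -> (forall j, (j < N)%N -> (ipS l1 l2) d (Q j) = 0) -> d = 0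
  := @vanish R _ Ssym SD SZ Sdef _ HQ N d.
have Qpar n : Q n \Po - 'X = (-1) ^+ n *: Q n := @P_par R _ Ssym SD SZ Sdef _ HQ Srefl n.
have Sodd := @B_odd R _ Ssym SZ Srefl.
have Qk n : (ipS l1 l2) (Q n) (Q n) != 0 := @P_k R _ Sdef _ HQ n.
have SBl := @BBl R _ SD SZ.
have parX1 : forall (p : {poly R}) a, p \Po - 'X = (-1) ^+ a *: p ->
    ('X * p) \Po - 'X = (-1) ^+ (1 + a) *: ('X * p).
  by move=> p a hp; have := @parXm R 1 p a hp; rewrite expr1.
have szX1 : forall (p : {poly R}) n, p \is monic -> size p = n.+1 -> size ('X * p) = n.+2.
  by move=> p n mp sp; have := @size_Xm R 1 p n mp sp; rewrite expr1.
have mX1 : forall (p : {poly R}), p \is monic -> 'X * p \is monic.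
  by move=> p mp; have := @monic_Xm R 1 p mp; rewrite expr1.
have Q0 : Q 0%N = 1.
  apply/eqP; rewrite -subr_eq0; apply/eqP.
  apply/eqP; rewrite -size_poly_eq0 -leqn0.
  exact: (@monic_sub R _ _ 0%N (QM 0%N) (monic1 _) (QS 0%N) (size_poly1 _)).
split.
- exact: Q0.
- apply/eqP; rewrite -subr_eq0; apply/eqP.
  apply: (QV 1%N); first exact: (@monic_sub R _ _ 1%N (QM 1%N) (monicX _) (QS 1%N) (size_polyX _)).
  move=> j; rewrite ltnS leqn0 => /eqP ->.
  rewrite SBl (QNe 1%N 0%N) // sub0r.
  have hX : ('X : {poly R}) \Po - 'X = (-1) ^+ 1 *: 'X by have := compXn R 1; rewrite expr1.
  by rewrite (Sodd _ _ 1%N 0%N hX (Qpar 0%N)) ?oppr0.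
- move=> n n1.
  case: n n1 => [//|m] _.
  have e1 : (2 * m.+1 - 1 = (2 * m).+1)%N by lia.
  have e2 : (2 * m.+1 - 2 = 2 * m)%N by lia.
  have e3 : (2 * m.+1 = (2 * m).+2)%N by lia.
  rewrite e1 e2 e3 /k /kh.
  set M := (2 * m)%N.
  have P0 : (P M.+1).[0] = 0 := @odd_zero R _ _ (Ppar M.+1) (oddE2 m).
  apply/eqP; rewrite -subr_eq0 opprD addrA; apply/eqP.
  apply: (QV M.+2).
    apply: size_sub_le; last by apply: size_scale_le; rewrite QS; lia.
    exact: (@monic_sub R _ _ M.+2 (mX1 _ (PM _)) (QM _) (szX1 _ _ (PM _) (PS _)) (QS _)).
  move=> j jM.
  rewrite !SBl SZ ipS_X1 P0 mulr0 mul0r addr0.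
  have [jlt | jge] := ltnP j M.
    have -> : ipF (P M.+1) ('X * Q j) = 0 by apply: PO; rewrite (szX1 _ j (QM j) (QS j)); lia.
    rewrite (QNe M.+2 j); last lia.
    rewrite (QNe M j); last lia.
    by rewrite mulr0 !subr0.
  have : j = M \/ j = M.+1 by lia.
  case => ->.
    rewrite (PL M.+1 ('X * Q M)) ?mX1 ?(szX1 _ M (QM M) (QS M)) //.
    rewrite (QNe M.+2 M); last lia.
    by rewrite subr0 divfK ?Qk // subrr.
  rewrite (Fodd _ _ M.+1 (1 + M.+1) (Ppar _) (parX1 _ _ (Qpar _))); last first.
    by apply: (@odd_of _ M.+1); lia.
  rewrite (QNe M.+2 M.+1); last lia.
  rewrite (QNe M M.+1); last lia.
  by rewrite mulr0 !subr0.
- move=> n n2.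
  case: n n2 => [|[|m]] // _.
  have e : (m.+2 - 2 = m)%N by lia.
  rewrite e /k /kh /b.
  apply/eqP; rewrite -subr_eq0 !opprD !addrA; apply/eqP.
  apply: (QV m.+4).
    apply: size_sub_le; last by apply: size_scale_le; rewrite QS; lia.
    apply: size_sub_le; last by apply: size_scale_le; rewrite QS; lia.
    exact: (@monic_sub R _ _ m.+4 (@monic_Xm R 2 _ (PM _)) (QM _) (@size_Xm R 2 _ m.+2 (PM _) (PS _)) (QS _)).
  move=> j jm.
  rewrite !SBl !SZ.
  have [jlt | jge] := ltnP j m.
    rewrite ipS_X2l.
    have -> : ipF (P m.+2) ('X ^+ 2 * Q j) = 0 by apply: PO; rewrite (@size_Xm R 2 _ j (QM j) (QS j)); lia.
    rewrite (QNe m.+4 j); last lia.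
    rewrite (QNe m.+2 j); last lia.
    rewrite (QNe m j); last lia.
    by rewrite !mulr0 !subr0.
  have : j = m \/ j = m.+1 \/ j = m.+2 \/ j = m.+3 by lia.
  case=> [->|[->|[->|->]]].
  + rewrite ipS_X2l (PL m.+2 ('X ^+ 2 * Q m)) ?(@monic_Xm R 2 _ (QM _)) ?(@size_Xm R 2 _ m (QM m) (QS m)) //.
    rewrite (QNe m.+4 m); last lia.
    rewrite (QNe m.+2 m); last lia.
    by rewrite mulr0 !subr0 divfK ?Qk // subrr.
  + rewrite ipS_X2l (Fodd _ _ m.+2 (2 + m.+1) (Ppar _) (@parXm R 2 _ _ (Qpar _))); last first.
      by apply: (@odd_of _ m.+2); lia.
    rewrite (QNe m.+4 m.+1); last lia.
    rewrite (QNe m.+2 m.+1); last lia.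
    rewrite (QNe m m.+1); last lia.
    by rewrite !mulr0 !subr0.
  + rewrite (QNe m.+4 m.+2); last lia.
    rewrite (QNe m m.+2); last lia.
    by rewrite mulr0 !subr0 divfK ?Qk // subrr.
  + rewrite ipS_X2l (Fodd _ _ m.+2 (2 + m.+3) (Ppar _) (@parXm R 2 _ _ (Qpar _))); last first.
      by apply: (@odd_of _ m.+3); lia.
    rewrite (QNe m.+4 m.+3); last lia.
    rewrite (QNe m.+2 m.+3); last lia.
    rewrite (QNe m m.+3); last lia.
    by rewrite !mulr0 !subr0.
- move=> n n2.
  case: n n2 => [|[|m]] // _.
  have e : (m.+2 - 2 = m)%N by lia.
  rewrite e /k /kh /b.
  apply/eqP; rewrite -subr_eq0 !opprD !addrA; apply/eqP.
  apply: (PV m.+4).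
    apply: size_sub_le; last by apply: size_scale_le; rewrite PS; lia.
    apply: size_sub_le; last by apply: size_scale_le; rewrite PS; lia.
    exact: (@monic_sub R _ _ m.+4 (@monic_Xm R 2 _ (QM _)) (PM _) (@size_Xm R 2 _ m.+2 (QM _) (QS _)) (PS _)).
  move=> j jm.
  rewrite !FBl !FZ.
  have [jlt | jge] := ltnP j m.
    rewrite (ipF_Xm 2) -(ipS_X2r l1 l2).
    have -> : ipS l1 l2 (Q m.+2) ('X ^+ 2 * P j) = 0 by apply: QO; rewrite (@size_Xm R 2 _ j (PM j) (PS j)); lia.
    rewrite (PNe m.+4 j); last lia.
    rewrite (PNe m.+2 j); last lia.
    rewrite (PNe m j); last lia.
    by rewrite !mulr0 !subr0.
  have : j = m \/ j = m.+1 \/ j = m.+2 \/ j = m.+3 by lia.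
  case=> [->|[->|[->|->]]].
  + rewrite (ipF_Xm 2) -(ipS_X2r l1 l2) (QL m.+2 ('X ^+ 2 * P m)) ?(@monic_Xm R 2 _ (PM _)) ?(@size_Xm R 2 _ m (PM m) (PS m)) //.
    rewrite (PNe m.+4 m); last lia.
    rewrite (PNe m.+2 m); last lia.
    by rewrite mulr0 !subr0 divfK ?Pk // subrr.
  + rewrite (Fodd _ _ (2 + m.+2) m.+1 (@parXm R 2 _ _ (Qpar _)) (Ppar _)); last first.
      by apply: (@odd_of _ m.+2); lia.
    rewrite (PNe m.+4 m.+1); last lia.
    rewrite (PNe m.+2 m.+1); last lia.
    rewrite (PNe m m.+1); last lia.
    by rewrite !mulr0 !subr0.
  + rewrite (ipF_Xm 2) -(ipS_X2r l1 l2) Ssym.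
    rewrite (PNe m.+4 m.+2); last lia.
    rewrite (PNe m m.+2); last lia.
    by rewrite mulr0 !subr0 -[_ * _ * ipF _ _]mulrA divfK ?Pk // divfK ?Qk // subrr.
  + rewrite (Fodd _ _ (2 + m.+2) m.+3 (@parXm R 2 _ _ (Qpar _)) (Ppar _)); last first.
      by apply: (@odd_of _ m.+3); lia.
    rewrite (PNe m.+4 m.+3); last lia.
    rewrite (PNe m.+2 m.+3); last lia.
    rewrite (PNe m m.+3); last lia.
    by rewrite !mulr0 !subr0.
Qed.
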